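(* Let $n\geq6$ and let $Z\in\mathbb{R}^{n\times4}$ be totally positive satisfying Assumption (G). For any $i,j,k\in[n]$ such that the pairs $\{i,i+1\},\{j,j+1\},\{k,k+1\}$ (indices mod $n$) are pairwise disjoint, the conic $L_{i(i+1)}\cap L_{j(j+1)}\cap L_{k(k+1)}\subset\mathrm{Gr}_{\mathbb{C}}(2,4)$ of lines meeting the three lines $Z_iZ_{i+1}$, $Z_jZ_{j+1}$, $Z_kZ_{k+1}$ does not intersect $\mathcal{A}_n(Z)$.
   Context: $Z$ totally positive: all $4\times4$ minors positive; its rows $Z_1,\dots,Z_n$ are points of $\mathbb{P}^3$. $\mathcal{A}_n(Z)\subset\mathrm{Gr}_{\mathbb{R}}(2,4)$ is the image of the totally nonnegative Grassmannian $\mathrm{Gr}(2,n)_{\ge0}$ under $\mathrm{rowspan}(X)\mapsto\mathrm{rowspan}(XZ)$. $\langle AB\,ij\rangle$ is the determinant of the matrix with rows $A,B,Z_i,Z_j$. Assumption (G): no line $AB$ has more than $4$ of $\langle AB\,i(i+1)\rangle$, $i\in[n]$ (cyclically), vanishing. *)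

(* Defs.v *)
From HB Require Import structures.
From mathcomp Require Import all_boot all_order all_algebra.
Set Implicit Arguments. Unset Strict Implicit. Unset Printing Implicit Defensive.
Import Order.TTheory GRing.Theory Num.Theory.
Local Open Scope ring_scope.

Definition nxt (n : nat) (i : 'I_n) : 'I_n := ordS i.

Definition bracket (R : comNzRingType) (A B C D : 'rV[R]_4) : R :=
  \det (\matrix_(r < 4, c < 4) (nth A [:: A; B; C; D] r) 0 c).

Definition totally_positive (R : realFieldType) (n : nat) (Z : 'M[R]_(n, 4)) :=
  forall f : 'I_4 -> 'I_n, (forall a b : 'I_4, (a < b)%N -> (f a < f b)%N) ->
    0 < \det (rowsub f Z).

Definition tnn_gr2 (R : realFieldType) (n : nat) (X : 'M[R]_(2, n)) :=
  \rank X = 2%N /\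
  forall a b : 'I_n, (a < b)%N -> 0 <= X 0 a * X 1 b - X 0 b * X 1 a.

(* Lines (A,B independent in R^4) of the amplituhedron A_n(Z): A, B are the
   two rows of XZ for some X in Gr(2,n)_{>=0} (with rowspan(XZ) in Gr(2,4)). *)
Definition in_amplituhedron (R : realFieldType) (n : nat) (Z : 'M[R]_(n, 4))
  (A B : 'rV[R]_4) :=
  \rank (col_mx A B) = 2%N /\
  exists X : 'M[R]_(2, n), tnn_gr2 X /\ A = row 0 (X *m Z) /\ B = row 1 (X *m Z).

Definition assumptionG (R : realFieldType) (n : nat) (Z : 'M[R]_(n, 4)) :=
  forall A B : 'rV[R]_4, \rank (col_mx A B) = 2%N ->
    (#|[set i : 'I_n | bracket A B (row i Z) (row (nxt i) Z) == 0%R]| <= 4)%N.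

Definition cpair (n : nat) (i : 'I_n) : {set 'I_n} := [set i; nxt i].

(* Main.v *)
Require Import Defs.
From HB Require Import structures.
From mathcomp Require Import all_boot all_order all_algebra ring zify.
Set Implicit Arguments. Unset Strict Implicit. Unset Printing Implicit Defensive.
Import Order.TTheory GRing.Theory Num.Theory.
Local Open Scope ring_scope.

Definition d4 (R : comNzRingType) (g : nat -> nat -> R) : R :=
 g 0 0 * g 1 1 * g 2 2 * g 3 3 - g 0 0 * g 1 1 * g 2 3 * g 3 2 - g 0 0 * g 1 2 * g 2 1 * g 3 3 + g 0 0 * g 1 2 * g 2 3 * g 3 1 + g 0 0 * g 1 3 * g 2 1 * g 3 2 - g 0 0 * g 1 3 * g 2 2 * g 3 1 - g 0 1 * g 1 0 * g 2 2 * g 3 3 + g 0 1 * g 1 0 * g 2 3 * g 3 2 + g 0 1 * g 1 2 * g 2 0 * g 3 3 - g 0 1 * g 1 2 * g 2 3 * g 3 0 - g 0 1 * g 1 3 * g 2 0 * g 3 2 + g 0 1 * g 1 3 * g 2 2 * g 3 0 + g 0 2 * g 1 0 * g 2 1 * g 3 3 - g 0 2 * g 1 0 * g 2 3 * g 3 1 - g 0 2 * g 1 1 * g 2 0 * g 3 3 + g 0 2 * g 1 1 * g 2 3 * g 3 0 + g 0 2 * g 1 3 * g 2 0 * g 3 1 - g 0 2 * g 1 3 * g 2 1 * g 3 0 - g 0 3 * g 1 0 * g 2 1 * g 3 2 + g 0 3 * g 1 0 * g 2 2 * g 3 1 + g 0 3 * g 1 1 * g 2 0 * g 3 2 - g 0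 3 * g 1 1 * g 2 2 * g 3 0 - g 0 3 * g 1 2 * g 2 0 * g 3 1 + g 0 3 * g 1 2 * g 2 1 * g 3 0.

Lemma det4 (R : comNzRingType) (M : 'M[R]_4) :
  \det M = d4 (fun r c => M (inord r) (inord c)).
Proof.
set g := (fun r c : nat => M (inord r) (inord c)).
have -> : M = \matrix_(i, j) g i j.
  by apply/matrixP => i j; rewrite mxE /g !inord_val.
rewrite (expand_det_row _ ord0) !big_ord_recl big_ord0 /cofactor.
rewrite !(expand_det_row _ ord0) !big_ord_recl !big_ord0 /cofactor.
rewrite !(expand_det_row _ ord0) !big_ord_recl !big_ord0 /cofactor.
rewrite !det_mx11 !mxE /= /d4.
rewrite !expr0 !expr1 ?expr2.
ring.
Qed.


Lemma bracketE (R : comNzRingType) (A B C D : 'rV[R]_4) :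
  bracket A B C D = d4 (fun r c => (nth A [:: A; B; C; D] r) 0 (inord c)).
Proof. by rewrite /bracket det4 /d4 !mxE !inordK. Qed.

Section Br.
Variable R : comNzRingType.
Implicit Types A B C D u v : 'rV[R]_4.

Lemma brD1 u1 u2 v C D : bracket (u1 + u2) v C D = bracket u1 v C D + bracket u2 v C D.
Proof. rewrite !bracketE /d4 /= !mxE; ring. Qed.
Lemma brZ1 a u v C D : bracket (a *: u) v C D = a * bracket u v C D.
Proof. rewrite !bracketE /d4 /= !mxE; ring. Qed.
Lemma br01 v C D : bracket 0 v C D = 0.
Proof. rewrite !bracketE /d4 /= !mxE; ring. Qed.
Lemma brD2 u v1 v2 C D : bracket u (v1 + v2) C D = bracket u v1 C D + bracket u v2 C D.
Proof. rewrite !bracketE /d4 /= !mxE; ring. Qed.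
Lemma brZ2 a u v C D : bracket u (a *: v) C D = a * bracket u v C D.
Proof. rewrite !bracketE /d4 /= !mxE; ring. Qed.
Lemma br02 u C D : bracket u 0 C D = 0.
Proof. rewrite !bracketE /d4 /= !mxE; ring. Qed.
Lemma brN A B C D : bracket B A C D = - bracket A B C D.
Proof. rewrite !bracketE /d4 /=; ring. Qed.
Lemma brP1 A B C D : bracket A B C D = bracket C D A B.
Proof. rewrite !bracketE /d4 /=; ring. Qed.
Lemma brP2 A B C D : bracket A B C D = bracket A C D B.
Proof. rewrite !bracketE /d4 /=; ring. Qed.
Lemma brP3 A B C D : bracket A B C D = - bracket D A B C.
Proof. rewrite !bracketE /d4 /=; ring. Qed.
Lemma brAC A B D : bracket A B A D = 0.
Proof. rewrite !bracketE /d4 /=; ring. Qed.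
Lemma brAD A B C : bracket A B C A = 0.
Proof. rewrite !bracketE /d4 /=; ring. Qed.
Lemma brBC A B D : bracket A B B D = 0.
Proof. rewrite !bracketE /d4 /=; ring. Qed.
Lemma brBD A B C : bracket A B C B = 0.
Proof. rewrite !bracketE /d4 /=; ring. Qed.

Lemma brsum1 (I : finType) (F : I -> 'rV[R]_4) v C D :
  bracket (\sum_i F i) v C D = \sum_i bracket (F i) v C D.
Proof.
apply: (big_morph (fun u => bracket u v C D)); [by move=> x y; rewrite brD1 | by rewrite br01].
Qed.
Lemma brsum2 (I : finType) (F : I -> 'rV[R]_4) u C D :
  bracket u (\sum_i F i) C D = \sum_i bracket u (F i) C D.
Proof.
apply: (big_morph (fun v => bracket u v C D)); [by move=> x y; rewrite brD2 | by rewrite br02].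
Qed.
End Br.

Lemma rowXZ (R : comNzRingType) n (X : 'M[R]_(2, n)) (Z : 'M[R]_(n, 4)) (r : 'I_2) :
  row r (X *m Z) = \sum_a X r a *: row a Z.
Proof. by rewrite row_mul mulmx_sum_row; apply: eq_bigr => a _; rewrite mxE. Qed.

Lemma expand (R : comNzRingType) n (X : 'M[R]_(2, n)) (Z : 'M[R]_(n, 4)) C D :
  bracket (row 0 (X *m Z)) (row 1 (X *m Z)) C D =
  \sum_a \sum_b X 0 a * X 1 b * bracket (row a Z) (row b Z) C D.
Proof.
rewrite !rowXZ brsum1; apply: eq_bigr => a _.
rewrite brZ1 brsum2 mulr_sumr; apply: eq_bigr => b _.
by rewrite brZ2 mulrA.
Qed.

Lemma antisym_sum (R : comNzRingType) (I : finType) (x y : I -> R) (br : I -> I -> R)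
  (hbr : forall a b, br b a = - br a b) :
  \sum_a \sum_b (x a * y b - x b * y a) * br a b =
  2 * \sum_a \sum_b x a * y b * br a b.
Proof.
have E : \sum_a \sum_b x b * y a * br a b = - \sum_a \sum_b x a * y b * br a b.
  rewrite exchange_big /= -sumrN; apply: eq_bigr => a _.
  rewrite -sumrN; apply: eq_bigr => b _.
  by rewrite hbr mulrN.
transitivity (\sum_a \sum_b x a * y b * br a b - \sum_a \sum_b x b * y a * br a b).
  rewrite -sumrB; apply: eq_bigr => a _; rewrite -sumrB; apply: eq_bigr => b _.
  by rewrite mulrBl.
rewrite E; ring.
Qed.

Lemma psum2_eq0 (R : numDomainType) (I : finType) (F : I -> I -> R) :
  (forall a b, 0 <= F a b) -> \sum_a \sum_b F a b = 0 -> forall a b, F a b = 0.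
Proof.
move=> h0 hs a b.
have H1 := psumr_eq0P (P := xpredT) (F := fun a => \sum_b F a b)
  (fun a _ => sumr_ge0 _ (fun b _ => h0 a b)).
have H2 := psumr_eq0P (P := xpredT) (F := fun b => F a b) (fun b _ => h0 a b).
have ha := H1 hs a isT.
exact: H2 ha b isT.
Qed.

Lemma nxtE n (i : 'I_n) : nat_of_ord (nxt i) = (if i.+1 == n then 0 else i.+1)%N.
Proof.
rewrite /nxt /=; case: eqP => [->|h]; first by rewrite modnn.
rewrite modn_small //; have := ltn_ord i; lia.
Qed.

Lemma tp4 (R : realFieldType) n (Z : 'M[R]_(n, 4)) (hZ : totally_positive Z)
  (a b c d : 'I_n) : (a < b)%N -> (b < c)%N -> (c < d)%N ->
  0 < bracket (row a Z) (row b Z) (row c Z) (row d Z).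
Proof.
move=> hab hbc hcd.
have -> : bracket (row a Z) (row b Z) (row c Z) (row d Z) =
   \det (rowsub (fun r : 'I_4 => nth a [:: a; b; c; d] r) Z).
  rewrite /bracket; congr (\det _); apply/matrixP => r s; rewrite !mxE.
  by case: r => [[|[|[|[|r]]]] hr] //=; rewrite mxE.
apply: hZ => r s.
case: r => [[|[|[|[|r]]]] hr]; case: s => [[|[|[|[|s]]]] hs] //= _; lia.
Qed.

Definition sgi (R : comNzRingType) n (i : 'I_n) : R := if (i.+1 == n)%N then -1 else 1.

Lemma notin_cpair n (i a : 'I_n) : a \notin cpair i ->
  (nat_of_ord a <> i /\ nat_of_ord a <> nxt i)%N.
Proof.
rewrite !inE => /norP[h1 h2]; split => h.
  by move/eqP: h1; apply; apply: val_inj.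
by move/eqP: h2; apply; apply: val_inj.
Qed.

Lemma sign_pos (R : realFieldType) n (Z : 'M[R]_(n, 4)) (hZ : totally_positive Z)
  (i a b : 'I_n) : (a < b)%N -> a \notin cpair i -> b \notin cpair i ->
  0 < sgi R i * bracket (row a Z) (row b Z) (row i Z) (row (nxt i) Z).
Proof.
move=> hab /notin_cpair[ai ai'] /notin_cpair[bi bi'].
have hi := ltn_ord i; have ha := ltn_ord a; have hb := ltn_ord b.
move: ai' bi'; rewrite nxtE /sgi => ai' bi'.
case: (i.+1 =P n) ai' bi' => E ai' bi'.
  rewrite brP3 mulN1r opprK; apply: tp4 => //; rewrite ?nxtE ?E ?eqxx; lia.
rewrite mul1r.
have [h1|[h2|h3]] : (b < i \/ (a < i /\ i.+1 < b) \/ i.+1 < a)%N by lia.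
- by apply: tp4 => //; rewrite nxtE; case: (i.+1 =P n).
- rewrite brP2; apply: tp4; rewrite ?nxtE; case: (i.+1 =P n) => //; lia.
- rewrite brP1; apply: tp4; rewrite ?nxtE; case: (i.+1 =P n) => //; lia.
Qed.

Lemma br_in_cpair (R : comNzRingType) n (Z : 'M[R]_(n, 4)) (i c d : 'I_n) :
  (c \in cpair i) || (d \in cpair i) ->
  bracket (row c Z) (row d Z) (row i Z) (row (nxt i) Z) = 0.
Proof.
rewrite !inE => /orP[/orP[]|/orP[]] /eqP ->;
  by rewrite ?brAC ?brAD ?brBC ?brBD.
Qed.

Lemma key (R : realFieldType) n (Z : 'M[R]_(n, 4)) (hZ : totally_positive Z)
  (X : 'M[R]_(2, n)) (hX : tnn_gr2 X) (i : 'I_n) :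
  bracket (row 0 (X *m Z)) (row 1 (X *m Z)) (row i Z) (row (nxt i) Z) = 0 ->
  forall a b : 'I_n, (a < b)%N -> a \notin cpair i -> b \notin cpair i ->
  X 0 a * X 1 b - X 0 b * X 1 a = 0.
Proof.
move=> h0 a b hab ha hb.
pose br := fun a b : 'I_n => bracket (row a Z) (row b Z) (row i Z) (row (nxt i) Z).
pose p := fun a b : 'I_n => X 0 a * X 1 b - X 0 b * X 1 a.
have hT : \sum_c \sum_d p c d * br c d = 0.
  rewrite /p antisym_sum; last by move=> c d; rewrite /br brN.
  by rewrite /br -expand h0 mulr0.
have hlt : forall c d : 'I_n, (c < d)%N -> 0 <= sgi R i * (p c d * br c d).
  move=> c d hcd.
  case: (boolP ((c \in cpair i) || (d \in cpair i))) => hc.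
    by rewrite /br br_in_cpair // !mulr0.
  move: hc; rewrite negb_or => /andP[hc hd].
  rewrite mulrCA; apply: mulr_ge0; first exact: hX.2.
  exact: ltW (sign_pos hZ hcd hc hd).
have hF : forall c d, 0 <= sgi R i * (p c d * br c d).
  move=> c d; case: (ltngtP c d) => hcd; first exact: hlt.
    have -> : p c d * br c d = p d c * br d c by rewrite /p /br brN; ring.
    exact: hlt.
  have -> : c = d by apply: val_inj.
  by rewrite /p subrr mul0r mulr0.
have hS : \sum_c \sum_d sgi R i * (p c d * br c d) = 0.
  transitivity (sgi R i * \sum_c \sum_d p c d * br c d); last by rewrite hT mulr0.
  rewrite mulr_sumr; apply: eq_bigr => c _.
  by rewrite mulr_sumr.
have := psum2_eq0 hF hS a b.
rewrite mulrCA => /eqP; rewrite mulf_eq0 => /orP[/eqP //|].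
by rewrite gt_eqF // (sign_pos hZ hab ha hb).
Qed.

Lemma rank_le1 (R : fieldType) n (X : 'M[R]_(2, n)) :
  (forall a b, X 0 a * X 1 b = X 0 b * X 1 a) -> (\rank X <= 1)%N.
Proof.
move=> h.
case: (pickP (fun a => X 0 a != 0)) => [a ha | h0].
  apply: leq_trans (rank_leq_row (row 0 X)).
  apply: mxrankS; apply/row_subP => r.
  case: r => [[|[|r]] hr] //.
    have -> : Ordinal hr = 0 by apply: val_inj.
    exact: submx_refl.
  have -> : Ordinal hr = 1 by apply: val_inj.
  have -> : row 1 X = (X 1 a / X 0 a) *: row 0 X.
    apply/rowP => c; rewrite !mxE.
    apply: (mulfI ha); rewrite h; field; exact: ha.
  exact: scalemx_sub (submx_refl _).
apply: leq_trans (rank_leq_row (row 1 X)).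
apply: mxrankS; apply/row_subP => r.
case: r => [[|[|r]] hr] //.
  have -> : Ordinal hr = 0 by apply: val_inj.
  have -> : row 0 X = 0 by apply/rowP => c; rewrite !mxE; move/negbFE/eqP: (h0 c).
  exact: sub0mx.
have -> : Ordinal hr = 1 by apply: val_inj.
exact: submx_refl.
Qed.

Theorem lemma4p6 (R : realFieldType) (n : nat) (Z : 'M[R]_(n, 4))
  (hn : (6 <= n)%N) (hZ : totally_positive Z) (hG : assumptionG Z)
  (i j k : 'I_n)
  (hij : [disjoint cpair i & cpair j]) (hik : [disjoint cpair i & cpair k])
  (hjk : [disjoint cpair j & cpair k]) :
  forall A B : 'rV[R]_4, in_amplituhedron Z A B ->
    ~ [/\ bracket A B (row i Z) (row (nxt i) Z) = 0,
          bracket A B (row j Z) (row (nxt j) Z) = 0 &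
          bracket A B (row k Z) (row (nxt k) Z) = 0].
Proof.
move=> A B [_ [X [hX [hA hB]]]] [h1 h2 h3].
rewrite hA hB in h1 h2 h3.
have hall : forall a b : 'I_n, (a < b)%N -> X 0 a * X 1 b - X 0 b * X 1 a = 0.
  move=> a b hab.
  case: (boolP ((a \in cpair i) || (b \in cpair i))) => hi; last first.
    by move: hi; rewrite negb_or => /andP[]; exact: (key hZ hX h1 hab).
  case: (boolP ((a \in cpair j) || (b \in cpair j))) => hj; last first.
    by move: hj; rewrite negb_or => /andP[]; exact: (key hZ hX h2 hab).
  case: (boolP ((a \in cpair k) || (b \in cpair k))) => hk; last first.
    by move: hk; rewrite negb_or => /andP[]; exact: (key hZ hX h3 hab).
  exfalso.
  move: hi hj hk => /orP[] hi /orP[] hj /orP[] hk;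
  by [rewrite (disjointFr hij hi) in hj | rewrite (disjointFr hik hi) in hk
     | rewrite (disjointFr hjk hj) in hk].
have : (\rank X <= 1)%N.
  apply: rank_le1 => a b; case: (ltngtP a b) => hab.
  - by apply/eqP; rewrite -subr_eq0; apply/eqP; exact: hall.
  - by apply/eqP; rewrite eq_sym -subr_eq0; apply/eqP; exact: hall.
  - by have -> : a = b by apply: val_inj.
by rewrite hX.1.
Qed.
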